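(* Let $n \ge 2$ and let $x, y, z \in \mathbb{R}^n/\mathbb{R}\mathbb{1}$. Then \[ \frac{1}{n-1}\, d_{\Delta}(x,y) \;\le\; \frac{1}{n-1}\, d_{\Delta}(x,z) + d_{\Delta}(y,z). \]
   Context: $\mathbb{1}=(1,\dots,1)\in\mathbb{R}^n$. The tropical torus is $\mathbb{R}^n/\mathbb{R}\mathbb{1}=\{x+\mathbb{R}\mathbb{1} : x\in\mathbb{R}^n\}$. The asymmetric tropical distance on $\mathbb{R}^n$ is $d_{\Delta}(x,y)=\sum_{i=1}^n (y_i-x_i) + n\max_{i}(x_i-y_i)$. It satisfies $d_\Delta(x+\lambda\mathbb{1},y+\mu\mathbb{1})=d_\Delta(x,y)$ for all $\lambda,\mu\in\mathbb{R}$, and hence induces a function $d_\Delta$ on $\mathbb{R}^n/\mathbb{R}\mathbb{1}$. *)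

(* Defs.v *)
From mathcomp Require Import all_boot all_order all_algebra.
Set Implicit Arguments. Unset Strict Implicit. Unset Printing Implicit Defensive.
Import Order.TTheory GRing.Theory Num.Theory.
Local Open Scope ring_scope.

(* The max over 'I_n is taken as \big[Num.max/ (x 0 - y 0)] for n>0; we use a
   fold with the first-coordinate seed so no bottom element is needed. *)
Definition tmax (R : realDomainType) (n : nat) (x y : 'rV[R]_n.+1) : R :=
  \big[Num.max/(x 0 0 - y 0 0)]_(i < n.+1) (x 0 i - y 0 i).

Definition d_trop (R : realDomainType) (n : nat) (x y : 'rV[R]_n.+1) : R :=
  \sum_(i < n.+1) (y 0 i - x 0 i) + (n.+1)%:R * tmax x y.

(* Main.v *)
Require Import Defs.
From mathcomp Require Import all_boot all_order all_algebra.
From mathcomp Require Import ring lra.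
Import Order.TTheory GRing.Theory Num.Theory.
Local Open Scope ring_scope.

Lemma tmax_ge (R : realDomainType) (n : nat) (x y : 'rV[R]_n.+1) i :
  x 0 i - y 0 i <= tmax x y.
Proof. by rewrite /tmax (bigD1 i) //= le_max lexx. Qed.

Lemma tmax_ex (R : realDomainType) (n : nat) (x y : 'rV[R]_n.+1) :
  exists k, tmax x y = x 0 k - y 0 k.
Proof.
rewrite /tmax; apply: (big_ind (fun v => exists k, v = x 0 k - y 0 k)).
- by exists 0.
- move=> a b [k ->] [l ->]; case: (leP (x 0 k - y 0 k) (x 0 l - y 0 l)) => _.
  + by exists l. + by exists k.
- by move=> i _; exists i.
Qed.

Arguments tmax_ge {R n} x y i.
Arguments tmax_ex {R n} x y.

Theorem mainTheorem1 (R : realFieldType) (m : nat) (hm : (1 <= m)%N)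
  (x y z : 'rV[R]_m.+1) :
  d_trop x y / m%:R <= d_trop x z / m%:R + d_trop y z.
Proof.
have mpos : 0 < m%:R :> R by rewrite ltr0n.
have [k hk] := tmax_ex x y.
have h1 := tmax_ge x z k.
have h2 : tmax y z - (y 0 k - z 0 k) <= \sum_(i < m.+1) (tmax y z - (y 0 i - z 0 i)).
  rewrite (bigD1 k) //= lerDl; apply: sumr_ge0 => i _.
  by rewrite subr_ge0 tmax_ge.
have e1 : \sum_(i < m.+1) (tmax y z - (y 0 i - z 0 i))
   = (m.+1)%:R * tmax y z + \sum_(i < m.+1) (z 0 i - y 0 i).
  rewrite big_split /= sumr_const card_ord mulr_natl; congr (_ + _).
  by apply: eq_bigr => i _; rewrite opprB.
have e2 : \sum_(i < m.+1) (y 0 i - x 0 i)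
   = \sum_(i < m.+1) (z 0 i - x 0 i) - \sum_(i < m.+1) (z 0 i - y 0 i).
  rewrite -sumrB; apply: eq_bigr => i _; ring.
rewrite /d_trop e2 ler_pdivrMr // mulrDl divfK ?lt0r_neq0 //.
rewrite e1 in h2.
move: h1 h2 hk mpos.
set Sxz := \sum_(i < m.+1) (z 0 i - x 0 i).
set Syz := \sum_(i < m.+1) (z 0 i - y 0 i).
rewrite -natr1.
move: (tmax x y) (tmax x z) (tmax y z) (x 0 k) (y 0 k) (z 0 k) => a b c p q r.
move=> h1 h2 hk mpos; rewrite hk.
nra.
Qed.
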